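(* Let $H$ be a real Hilbert space, let $D\subseteq H$ be a nonempty closed convex set, and let $T_1,\dots,T_m:D\to D$ be firmly nonexpansive operators with $F:=\bigcap_{i=1}^m\mathrm{Fix}(T_i)\neq\emptyset$. Let $\mathcal{M}'$ be a finite nonempty subset of $\mathcal{M}$, enumerated as $S_1,\dots,S_N$ with $N=|\mathcal{M}'|$ and $S_r=(\Omega_r,w_r)$. Let $j(k)=(k \bmod N)+1$ for $k\ge0$, let $(\lambda_k)_{k\in\mathbb{N}}$ be a steering sequence, and let $u,x^0\in D$. Then the sequence defined by $$x^{k+1}=\lambda_k u+(1-\lambda_k)\sum_{t\in\Omega_{j(k)}}w_{j(k)}(t)T[t](x^k),\quad k\ge0,$$ converges strongly to $P_F(u)$.
   Context: An operator $T:D\to H$ is firmly nonexpansive if $\|T(x)-T(y)\|^2\le\langle x-y,T(x)-T(y)\rangle$ for all $x,y\in D$. $\mathrm{Fix}(T)=\{x\in D: T(x)=x\}$; $P_F$ is the metric projection onto $F$. An index vector is a finite tuple $t=(t_1,\dots,t_q)$ with each $t_\ell\in\{1,\dots,m\}$; the string operator is $T[t]:=T_{t_q}T_{t_{q-1}}\cdots T_{t_1}$. A finite set $\Omega$ of index vectors is fit if every $i\in\{1,\dots,m\}$ appears as a component of some $t\in\Omega$. $\mathcal{M}$ denotes the collection of all pairs $(\Omega,w)$ where $\Omega$ is a fit finite set of index vectors and $w:\Omega\to(0,1]$ satisfies $\sum_{t\in\Omega}w(t)=1$. A steering sequence is a real sequence $(\lambda_k)_{k\in\mathbb{N}}$ with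 $\lambda_k\in[0,1]$ for all $k$, $\lim_{k\to\infty}\lambda_k=0$, $\sum_{k=0}^\infty\lambda_k=+\infty$, and $\sum_{k=0}^\infty|\lambda_{k+1}-\lambda_k|<\infty$. *)

(* Defs.v *)
From HB Require Import structures.
From mathcomp Require Import all_boot all_order all_algebra.
From mathcomp Require Import all_classical all_reals all_analysis.
Set Implicit Arguments. Unset Strict Implicit. Unset Printing Implicit Defensive.
Import Order.TTheory GRing.Theory Num.Theory.
Import numFieldNormedType.Exports.
Local Open Scope classical_set_scope.
Local Open Scope ring_scope.

(* A real inner product on V compatible with the norm of V: together with the
   completeness of V this makes V a real Hilbert space. *)
Definition is_inner_product (R : realType) (V : normedModType R)
  (ip : V -> V -> R) : Prop :=
  [/\ (forall x y, ip x y = ip y x),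
      (forall (a : R) (x y z : V), ip (a *: x + y) z = a * ip x z + ip y z)
    & (forall x, `|x| ^+ 2 = ip x x)].

Definition convex_set_of (R : realType) (V : normedModType R) (D : set V) :=
  forall x y, D x -> D y -> forall a : R, 0 <= a <= 1 ->
    D (a *: x + (1 - a) *: y).

Definition firmly_nonexpansive (R : realType) (V : normedModType R)
  (ip : V -> V -> R) (D : set V) (T : V -> V) : Prop :=
  (forall x, D x -> D (T x)) /\
  forall x y, D x -> D y -> `|T x - T y| ^+ 2 <= ip (x - y) (T x - T y).

Definition Fix (R : realType) (V : normedModType R) (D : set V) (T : V -> V) :
  set V := [set x | D x /\ T x = x].

(* index vectors t = (t_1,...,t_q) with entries in {1..m}, represented as
   seq 'I_m (entry i : 'I_m stands for i+1). String operator
   T[t] = T_{t_q} ... T_{t_1}  (t_1 applied first). *)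
Definition string_op (R : realType) (V : normedModType R) (m : nat)
  (T : 'I_m -> V -> V) (t : seq 'I_m) (x : V) : V :=
  foldl (fun y i => T i y) x t.

Definition in_M (R : realType) (m : nat) (Omega : seq (seq 'I_m))
  (w : seq 'I_m -> R) : Prop :=
  [/\ uniq Omega,
      (forall i : 'I_m, exists2 t, t \in Omega & i \in t),
      (forall t, t \in Omega -> 0 < w t <= 1)
    & \sum_(t <- Omega) w t = 1].

Definition steering (R : realType) (lam : nat -> R) : Prop :=
  [/\ (forall k, 0 <= lam k <= 1),
      lam @ \oo --> (0 : R),
      series lam @ \oo --> +oo
    & cvg (series (fun k => `|lam k.+1 - lam k|) @ \oo)].

Definition is_metric_proj (R : realType) (V : normedModType R) (F : set V)
  (u p : V) : Prop :=
  F p /\ forall y, F y -> `|u - p| <= `|u - y|.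

(* Main.v *)
Require Import Defs.
From HB Require Import structures.
From mathcomp Require Import all_boot all_order all_algebra.
From mathcomp Require Import all_classical all_reals all_analysis.
From mathcomp Require Import ring lra zify.
Set Implicit Arguments. Unset Strict Implicit. Unset Printing Implicit Defensive.
Import Order.TTheory GRing.Theory Num.Theory.
Import numFieldNormedType.Exports.
Local Open Scope classical_set_scope.
Local Open Scope ring_scope.

Section IP.
Context {R : realType} {V : normedModType R} (ip : V -> V -> R)
  (hip : is_inner_product ip).

Lemma ipC x y : ip x y = ip y x. Proof. by case: hip. Qed.
Lemma ipL a x y z : ip (a *: x + y) z = a * ip x z + ip y z.
Proof. by case: hip. Qed.
Lemma ipnorm x : `|x| ^+ 2 = ip x x. Proof. by case: hip. Qed.
Lemma ip0l z : ip 0 z = 0.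
Proof.
have := ipL 1 0 0 z; rewrite scaler0 addr0 mul1r => h.
lra.
Qed.
Lemma ipDl x y z : ip (x + y) z = ip x z + ip y z.
Proof. by rewrite -{1}(scale1r x) ipL mul1r. Qed.
Lemma ipZl a x z : ip (a *: x) z = a * ip x z.
Proof. by rewrite -(addr0 (a *: x)) ipL ip0l addr0. Qed.
Lemma ipNl x z : ip (- x) z = - ip x z.
Proof. by rewrite -scaleN1r ipZl mulN1r. Qed.
Lemma ipBl x y z : ip (x - y) z = ip x z - ip y z.
Proof. by rewrite ipDl ipNl. Qed.
Lemma ip0r z : ip z 0 = 0. Proof. by rewrite ipC ip0l. Qed.
Lemma ipDr x y z : ip z (x + y) = ip z x + ip z y.
Proof. by rewrite ipC ipDl !(ipC z). Qed.
Lemma ipZr a x z : ip z (a *: x) = a * ip z x.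
Proof. by rewrite ipC ipZl ipC. Qed.
Lemma ipNr x z : ip z (- x) = - ip z x.
Proof. by rewrite ipC ipNl ipC. Qed.
Lemma ipBr x y z : ip z (x - y) = ip z x - ip z y.
Proof. by rewrite ipDr ipNr. Qed.

Lemma normD2 x y : `|x + y| ^+ 2 = `|x| ^+ 2 + 2 * ip x y + `|y| ^+ 2.
Proof. by rewrite !ipnorm ipDl !ipDr (ipC y x); ring. Qed.
Lemma normB2 x y : `|x - y| ^+ 2 = `|x| ^+ 2 - 2 * ip x y + `|y| ^+ 2.
Proof. by rewrite normD2 normrN ipNr; ring. Qed.

Lemma CS x y : ip x y <= `|x| * `|y|.
Proof.
have [x0|xn0] := eqVneq x 0; first by rewrite x0 ip0l normr0 mul0r.
have X0 : 0 < `|x| by rewrite normr_gt0.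
set a := ip x y / `|x| ^+ 2.
have h := normB2 y (a *: x).
rewrite ipZr normrZ exprMn (ipC y x) in h.
have h2 : 0 <= `|y| ^+ 2 - 2 * (a * ip x y) + `|a| ^+ 2 * `|x| ^+ 2.
  by rewrite -h exprn_ge0.
rewrite real_normK ?num_real // in h2.
have e : a ^+ 2 * `|x| ^+ 2 = a * ip x y.
  by rewrite /a; field; rewrite gt_eqF.
rewrite e in h2.
have h3 : (ip x y) ^+ 2 <= (`|x| * `|y|) ^+ 2.
  have : a * ip x y = (ip x y) ^+ 2 / `|x| ^+ 2 by rewrite /a; field; rewrite gt_eqF.
  move=> e2; rewrite e2 in h2.
  have X2 : 0 < `|x| ^+ 2 by rewrite exprn_gt0.
  rewrite exprMn.
  have : (ip x y) ^+ 2 / `|x| ^+ 2 <= `|y| ^+ 2 by lra.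
  by rewrite ler_pdivrMr // mulrC.
have : 0 <= `|x| * `|y| by rewrite mulr_ge0.
nra.
Qed.

Lemma CSabs x y : `|ip x y| <= `|x| * `|y|.
Proof.
have := CS x y; have := CS (- x) y; rewrite ipNl normrN => h1 h2.
by rewrite ler_norml; apply/andP; split => //; lra.
Qed.

End IP.

Section Xu.
Context {R : realType}.

Lemma prod_bound (g : nat -> R) K i :
  (forall k, 0 <= g k <= 1) ->
  \prod_(K <= k < K + i) (1 - g k) <= 1 / (1 + \sum_(K <= k < K + i) g k).
Proof.
move=> hg; elim: i => [|i IH].
  by rewrite addn0 !big_geq // addr0 divr1.
rewrite addnS !big_nat_recr ?leq_addr //=.
set P := \prod_(_ <= _ < _) _ in IH *; set S := \sum_(_ <= _ < _) _ in IH *.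
have S0 : 0 <= S by rewrite /S; apply: sumr_ge0 => k _; case/andP: (hg k).
have := hg (K + i)%N; set c := g (K + i)%N => /andP [c0 c1].
have P0 : 0 <= P by rewrite /P; apply: prodr_ge0 => k _; case/andP: (hg k) => _; rewrite subr_ge0.
apply: (le_trans (y := (1 / (1 + S)) * (1 - c))).
  by apply: ler_wpM2r; rewrite ?subr_ge0.
rewrite mul1r ler_pdivrMl ?ltr_wpDr // div1r ler_pdivlMr ?ltr_wpDr ?addr_ge0 //; nra.
Qed.

Lemma xu_lemma (a g d b : nat -> R) :
  (forall k, 0 <= a k) -> (forall k, 0 <= g k <= 1) ->
  (forall K M, exists i, M <= \sum_(K <= k < K + i) g k) ->
  (forall e, 0 < e -> exists K, forall k, (K <= k)%N -> d k <= e) ->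
  (forall k, 0 <= b k) ->
  (forall e, 0 < e -> exists K, forall m n, (K <= m)%N -> \sum_(m <= k < n) b k <= e) ->
  (forall k, a k.+1 <= (1 - g k) * a k + g k * d k + b k) ->
  forall e, 0 < e -> exists K, forall n, (K <= n)%N -> a n <= e.
Proof.
move=> a0 hg gdiv hd b0 hb rec e e0.
have e30 : 0 < e / 3 by rewrite divr_gt0.
have [K1 hK1] := hd _ e30; have [K2 hK2] := hb _ e30.
set K := maxn K1 K2.
have claim : forall i, a (K + i)%N <= e / 3 + \sum_(K <= k < K + i) b k
      + \prod_(K <= k < K + i) (1 - g k) * a K.
  elim=> [|i IH].
    by rewrite addn0 !big_geq // mul1r addr0; rewrite lerDr; apply: ltW.
  rewrite addnS !big_nat_recr ?leq_addr //=.
  apply: (le_trans (rec _)).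
  have := hg (K + i)%N; set c := g (K + i)%N => /andP [c0 c1].
  have dK : d (K + i)%N <= e / 3 by apply: hK1; rewrite /K; lia.
  set S := \sum_(_ <= _ < _) _ in IH *; set P := \prod_(_ <= _ < _) _ in IH *.
  have S0 : 0 <= S by rewrite /S; apply: sumr_ge0.
  have := ler_wpM2l (x := 1 - c) _ IH; rewrite subr_ge0 => /(_ c1) h1.
  have : c * d (K + i)%N <= c * (e / 3) by apply: ler_wpM2l.
  have := a0 K. nra.
have [i0 hi0] := gdiv K (a K / (e / 3)).
exists (K + i0)%N => n Kn.
have -> : n = (K + (n - K))%N by lia.
apply: (le_trans (claim _)).
have hS : \sum_(K <= k < K + (n - K)) b k <= e / 3.
  by apply: hK2; rewrite leq_maxr.
have hP : \prod_(K <= k < K + (n - K)) (1 - g k) * a K <= e / 3.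
  apply: (le_trans (ler_wpM2r (a0 K) (prod_bound K (n - K) hg))).
  have mono : \sum_(K <= k < K + i0) g k <= \sum_(K <= k < K + (n - K)) g k.
    rewrite [X in _ <= X](@big_cat_nat _ _ _ (K + i0)%N) /=; [|lia|lia].
    by rewrite lerDl; apply: sumr_ge0 => k _; case/andP: (hg k).
  set S := \sum_(_ <= _ < K + (n - K)) _ in mono *.
  have S0 : 0 <= S.
    by rewrite /S; apply: sumr_ge0 => k _; case/andP: (hg k).
  rewrite mul1r mulrC -/(a K / (1 + S)) ler_pdivrMr ?ltr_wpDr //.
  have : a K / (e / 3) <= S by apply: le_trans mono.
  rewrite ler_pdivrMr //; nra.
lra.
Qed.

End Xu.

Lemma near_oo_ex (P : nat -> Prop) :
  (\forall n \near \oo, P n) -> exists K, forall n, (K <= n)%N -> P n.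
Proof. by move=> [K _ hK]; exists K => n Kn; apply: hK. Qed.

Lemma ex_near_oo (P : nat -> Prop) :
  (exists K, forall n, (K <= n)%N -> P n) -> \forall n \near \oo, P n.
Proof. by move=> [K hK]; exists K => // n /= Kn; apply: hK. Qed.

Section Conv.
Context {R : realType}.

Lemma cvg_to_eps {V : normedModType R} (x : nat -> V) (p : V) :
  x @ \oo --> p -> forall e, 0 < e -> exists K, forall n, (K <= n)%N -> `|x n - p| <= e.
Proof.
move/cvgrPdist_le => h e e0; have [K hK] := near_oo_ex (h e e0).
by exists K => n Kn; rewrite distrC; apply: hK.
Qed.

Lemma eps_to_cvg {V : normedModType R} (x : nat -> V) (p : V) :
  (forall e, 0 < e -> exists K, forall n, (K <= n)%N -> `|x n - p| <= e) -> x @ \oo --> p.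
Proof.
move=> h; apply/cvgrPdist_le => e e0; apply: ex_near_oo.
by have [K hK] := h e e0; exists K => n Kn; rewrite distrC; apply: hK.
Qed.

Lemma cauchy_to_cvg {V : completeNormedModType R} (z : nat -> V) :
  (forall e, 0 < e -> exists K, forall n, (K <= n)%N -> `|z K - z n| <= e) ->
  exists p : V, z @ \oo --> p.
Proof.
move=> h.
have : cvgn z.
  apply/cauchy_cvgP/cauchy_exP => e e0.
  have [K hK] := h (e / 2) (divr_gt0 e0 (ltr0Sn _ 1)).
  exists (z K); apply: ex_near_oo; exists K => n Kn.
  rewrite -ball_normE /ball /=; apply: (le_lt_trans (hK n Kn)).
  by rewrite ltr_pdivrMr // ltr_pMr // ltr1n.
by move=> hc; exists (limn z).
Qed.

Lemma series_div (g : nat -> R) :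
  series g @ \oo --> +oo -> forall K M, exists i, M <= \sum_(K <= k < K + i) g k.
Proof.
move/cvgryPge => h K M.
have [n0 hn0] := near_oo_ex (h (M + series g K)).
exists n0; have := hn0 (K + n0)%N (leq_addl _ _).
have e : series g (K + n0)%N = series g K + \sum_(K <= k < K + n0) g k.
  by rewrite /series /= (@big_cat_nat _ _ _ K 0 (K + n0)) // leq_addr.
rewrite e; lra.
Qed.

Lemma series_tail (d : nat -> R) :
  (forall k, 0 <= d k) -> cvg (series d @ \oo) ->
  forall e, 0 < e -> exists K, forall m n, (K <= m)%N -> \sum_(m <= k < n) d k <= e.
Proof.
move=> d0 /cvg_ex [l hl] e e0.
have [K hK] := cvg_to_eps hl (divr_gt0 e0 (ltr0Sn _ 1)).
exists K => m n Km.
have [mn|nm] := leqP m n; last by rewrite big_geq; [apply: ltW | apply: ltnW].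
have h1 := hK m Km; have h2 := hK n (leq_trans Km mn).
have : \sum_(m <= k < n) d k = series d n - series d m.
  rewrite /series /= (@big_cat_nat _ _ _ m 0 n) //=; ring.
move=> ->; move: h1 h2; rewrite !ler_norml => /andP[h1a h1b] /andP[h2a h2b].
lra.
Qed.

Lemma seq0_eps (g : nat -> R) :
  g @ \oo --> 0 -> forall e, 0 < e -> exists K, forall n, (K <= n)%N -> `|g n| <= e.
Proof. by move=> h e e0; have [K hK] := cvg_to_eps h e0; exists K => n /hK; rewrite subr0. Qed.

End Conv.

Lemma unif_K (N : nat) (P : nat -> nat -> Prop) :
  (forall r K K', (K <= K')%N -> P r K -> P r K') ->
  (forall r, (r < N)%N -> exists K, P r K) -> exists K, forall r, (r < N)%N -> P r K.
Proof.
move=> mono; elim: N => [|N IH] h; first by exists 0%N.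
have [K1 hK1] := IH (fun r rN => h r (ltnW rN)).
have [K2 hK2] := h N (ltnSn N).
exists (maxn K1 K2) => r; rewrite ltnS leq_eqVlt => /orP [/eqP ->|rN].
  by apply: (mono _ K2) => //; apply: leq_maxr.
by apply: (mono _ K1); [apply: leq_maxl| apply: hK1].
Qed.

Lemma banach_wrap (R : realType) (V : completeNormedModType R) (D : set V)
  (G : V -> V) (q : R) :
  closed D -> D !=set0 -> (forall x, D x -> D (G x)) -> 0 <= q -> q < 1 ->
  (forall x y, D x -> D y -> `|G x - G y| <= q * `|x - y|) ->
  exists2 p, D p & p = G p.
Proof.
move=> cD D0 GD q0 q1 Gl.
have GD' : {homo G : x / D x >-> D x} by [].
pose f := mkfun_fun GD'.
have : is_contraction f.
  exists (NngNum q0); split => //.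
  by move=> [a b] /= [Da Db]; exact: Gl.
by move=> /banach_fixed_point /(_ cD D0) [p Dp pG]; exists p.
Qed.

Definition ttn {R : realType} (n : nat) : R := (n.+2%:R)^-1.

Lemma tt01 {R : realType} n : 0 < @ttn R n < 1.
Proof.
rewrite /ttn invr_gt0 ltr0n /= invf_lt1 ?ltr0n //.
by rewrite ltr1n.
Qed.

Lemma tt_lt {R : realType} n n' : (n < n')%N -> @ttn R n' < ttn n.
Proof.
by move=> nn; rewrite /ttn ltf_pV2 ?posrE ?ltr0n // ltr_nat ltnS.
Qed.

Lemma tt_small {R : realType} (e : R) : 0 < e -> exists n0, forall n, (n0 <= n)%N -> ttn n <= e.
Proof.
move=> e0; have ie : 0 <= e^-1 by rewrite invr_ge0 ltW.
have := @archi_boundP R (e^-1) ie.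
set n0 := Num.Def.archi_bound _ => h.
exists n0 => n hn; rewrite /ttn.
have n00 : 0 < n0%:R :> R by apply: le_lt_trans h; rewrite ltW // invr_gt0.
rewrite -(invrK e) lef_pV2 ?posrE ?ltr0n ?invr_gt0 //.
apply: ltW; apply: lt_le_trans h _; rewrite ler_nat; lia.
Qed.

Lemma tt_half {R : realType} n : @ttn R n <= 2^-1.
Proof. by rewrite /ttn lef_pV2 ?posrE ?ltr0n // ler_nat. Qed.

Lemma le0_eps {R : realType} (x : R) : (forall e, 0 < e -> x <= e) -> x <= 0.
Proof.
move=> h; rewrite leNgt; apply/negP => x0.
have := h (x / 2) (divr_gt0 x0 (ltr0Sn _ 1)); lra.
Qed.

Section Curve.
Context {R : realType} {V : completeNormedModType R} (ip : V -> V -> R)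
  (hip : is_inner_product ip) (D : set V) (cD : closed D) (cvD : convex_set_of D)
  (F : set V) (f0 : V) (Ff0 : F f0) (u : V) (Du : D u) (S : V -> V)
  (SD : forall y, D y -> D (S y))
  (SNE : forall y y', D y -> D y' -> `|S y - S y'| <= `|y - y'|)
  (SQN : forall y f, D y -> F f -> `|S y - f| <= `|y - f|)
  (SST : forall y f, D y -> F f -> `|y - f| <= `|S y - f| -> F y).

Lemma lin_comb (t : R) (a b y : V) :
  t *: (a - y) + (1 - t) *: (b - y) = t *: a + (1 - t) *: b - y.
Proof.
by rewrite !scalerBr addrACA -opprD -scalerDl [t + _]addrC subrK scale1r.
Qed.

Lemma eqz_diff (t : R) z y : z = t *: u + (1 - t) *: S z ->
  z - y = t *: (u - y) + (1 - t) *: (S z - y).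
Proof. by move=> hz; rewrite lin_comb -hz. Qed.

Lemma eqz_res (t : R) z : z = t *: u + (1 - t) *: S z ->
  (1 - t) *: (z - S z) = t *: (u - z).
Proof.
move=> hz.
have h1 : (1 - t) *: S z = z - t *: u by rewrite {2}hz [t *: u + _]addrC addrK.
by rewrite scalerBr h1 scalerBl scale1r opprB addrC addrA subrK -scalerBr.
Qed.

Lemma key_ineq (t : R) z y : 0 < t < 1 -> D z -> D y ->
  z = t *: u + (1 - t) *: S z ->
  t * ip (u - z) (y - z) <= `|S y - y| * `|z - y|.
Proof.
move=> /andP [t0 t1] Dz Dy hz.
have e1 : `|z - y| ^+ 2 = t * ip (u - y) (z - y) + (1 - t) * ip (S z - y) (z - y).
  by rewrite (ipnorm hip) {1}(eqz_diff y hz) (ipL hip) (ipZl hip).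
have e2 : ip (S z - y) (z - y) = ip (S z - S y) (z - y) + ip (S y - y) (z - y).
  by rewrite -(ipDl hip) addrA subrK.
have c1 := CS hip (S z - S y) (z - y).
have c2 := CS hip (S y - y) (z - y).
have ne := SNE Dz Dy.
have e3 : ip (u - z) (y - z) = `|z - y| ^+ 2 - ip (u - y) (z - y).
  have -> : u - z = (u - y) - (z - y) by rewrite opprB addrA subrK.
  rewrite (ipBl hip) -(opprB z y) (ipNr hip) (ipNr hip) (ipnorm hip); ring.
have n0 := normr_ge0 (z - y); have n1 := normr_ge0 (S y - y).
have n2 := normr_ge0 (S z - S y).
rewrite e3; rewrite e2 in e1.
have : (1 - t) * ip (S z - S y) (z - y) <= (1 - t) * `|z - y| ^+ 2.
  apply: ler_wpM2l; first by lra.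
  apply: le_trans c1 _; rewrite expr2; apply: ler_wpM2r => //.
have h5 : (1 - t) * ip (S y - y) (z - y) <= `|S y - y| * `|z - y|.
  have ca := CSabs hip (S y - y) (z - y).
  have := ler_norm (ip (S y - y) (z - y)).
  have : 0 <= `|ip (S y - y) (z - y)| by [].
  nra.
nra.
Qed.

Lemma VI_z (t : R) z f : 0 < t < 1 -> D z -> F f ->
  z = t *: u + (1 - t) *: S z -> 0 <= ip (u - z) (z - f).
Proof.
move=> /andP [t0 t1] Dz Ff hz.
have hr := eqz_res hz.
have e : z - S z = (z - f) - (S z - f) by rewrite opprB addrA subrK.
have h1 : 0 <= ip (z - S z) (z - f).
  rewrite e (ipBl hip) -(ipnorm hip).
  have := CS hip (S z - f) (z - f); have := SQN Dz Ff.
  have := normr_ge0 (z - f); have := normr_ge0 (S z - f). nra.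
have h2 : t * ip (u - z) (z - f) = (1 - t) * ip (z - S z) (z - f).
  by rewrite -!(ipZl hip) hr.
have : 0 <= t * ip (u - z) (z - f) by rewrite h2 mulr_ge0 // subr_ge0 ltW.
by rewrite pmulr_rge0.
Qed.

Lemma bound_z (t : R) z f : 0 < t < 1 -> D z -> F f ->
  z = t *: u + (1 - t) *: S z -> `|u - z| <= `|u - f|.
Proof.
move=> ht Dz Ff hz.
have h := VI_z ht Dz Ff hz.
have e : u - z = (u - f) - (z - f) by rewrite opprB addrA subrK.
have h2 : `|u - z| ^+ 2 = ip (u - z) (u - f) - ip (u - z) (z - f).
  by rewrite (ipnorm hip) {2}e (ipBr hip).
have := CS hip (u - z) (u - f).
have := normr_ge0 (u - z); have := normr_ge0 (u - f). nra.
Qed.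

Lemma mono_z (s t : R) zs zt : 0 < s -> s < t -> t < 1 -> D zs -> D zt ->
  zs = s *: u + (1 - s) *: S zs -> zt = t *: u + (1 - t) *: S zt ->
  `|zs - zt| ^+ 2 <= `|u - zs| ^+ 2 - `|u - zt| ^+ 2.
Proof.
move=> s0 st t1 Dzs Dzt hzs hzt.
set a := u - zs; set b := u - zt; set d := zs - zt.
have ed : d = b - a by rewrite /a /b /d [RHS]addrC opprB addrA subrK.
set IA := ip (zs - S zs) d; set IB := ip (zt - S zt) d.
have hIA : (1 - s) * IA = s * ip a d by rewrite /IA -!(ipZl hip) (eqz_res hzs).
have hIB : (1 - t) * IB = t * ip b d by rewrite /IB -!(ipZl hip) (eqz_res hzt).
have hAB : IB <= IA.
  have hne := SNE Dzs Dzt.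
  have hcs := CS hip (S zs - S zt) d.
  have h1 : `|d| ^+ 2 = ip zs d - ip zt d by rewrite (ipnorm hip) {1}/d (ipBl hip).
  have h2 : ip (S zs - S zt) d = ip (S zs) d - ip (S zt) d by rewrite (ipBl hip).
  have h3 : IA - IB = (ip zs d - ip zt d) - (ip (S zs) d - ip (S zt) d).
    by rewrite /IA /IB !(ipBl hip); ring.
  have := normr_ge0 d; have := normr_ge0 (S zs - S zt).
  rewrite -/d in hne. nra.
set P := ip a b; set X := `|a| ^+ 2; set Y := `|b| ^+ 2.
have ha : ip a d = P - X by rewrite ed (ipBr hip) /X (ipnorm hip).
have hb : ip b d = Y - P by rewrite ed (ipBr hip) /Y (ipnorm hip) /P (ipC hip).
have hZ : `|d| ^+ 2 = X + Y - 2 * P.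
  by rewrite ed (normB2 hip) /X /Y /P (ipC hip); ring.
suff : Y <= P by rewrite hZ; lra.
rewrite leNgt; apply/negP => YP.
have IB0 : 0 < IB.
  have : 0 < (1 - t) * IB by rewrite hIB hb mulr_gt0 ?subr_gt0 //; lra.
  by rewrite pmulr_rgt0 // subr_gt0.
have IA0 : 0 < IA by lra.
have PX : 0 < P - X.
  have : 0 < (1 - s) * IA by rewrite mulr_gt0 // subr_gt0; lra.
  by rewrite hIA ha pmulr_rgt0.
have k1 : (1 - t) * (s * (P - X)) >= (1 - s) * (t * (Y - P)).
  rewrite -ha -hb -hIA -hIB; have : 0 <= (1 - s) * (1 - t) by apply: mulr_ge0; lra.
  nra.
have k2 : (1 - s) * (t * (Y - P)) > (1 - t) * (s * (Y - P)).
  have : 0 < Y - P by lra. nra.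
have : (1 - t) * s > 0 by apply: mulr_gt0; lra.
have := normr_ge0 d. nra.
Qed.

Lemma z_exists n : exists z, D z /\ z = ttn n *: u + (1 - ttn n) *: S z.
Proof.
have /andP [t0 t1] := @tt01 R n.
have [z Dz hz] : exists2 z, D z & z = (fun y => ttn n *: u + (1 - ttn n) *: S y) z.
  apply: (@banach_wrap R V D _ (1 - ttn n)) => //.
  - by exists u.
  - move=> y Dy; apply: cvD => //; [exact: SD|]; by rewrite ltW // ltW.
  - by rewrite subr_ge0 ltW.
  - by rewrite ltrBlDl ltrDr.
  - move=> y y' Dy Dy'; rewrite opprD addrACA subrr add0r -scalerBr normrZ ger0_norm; last by rewrite subr_ge0 ltW.
    by apply: ler_wpM2l; [rewrite subr_ge0 ltW|exact: SNE].
by exists z.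
Qed.

Lemma curve_lim : exists (z : nat -> V) (p : V), (forall n, D (z n)) /\
  (forall n, z n = ttn n *: u + (1 - ttn n) *: S (z n)) /\
  (forall n, `|u - z n| <= `|u - f0|) /\ z @ \oo --> p /\
  F p /\ (forall f, F f -> ip (u - p) (f - p) <= 0).
Proof.
have [z hz] := choice z_exists.
have Dz n : D (z n) by case: (hz n).
have ez n : z n = ttn n *: u + (1 - ttn n) *: S (z n) by case: (hz n).
set C := `|u - f0|.
have C0 : 0 <= C by exact: normr_ge0.
have bz n : `|u - z n| <= C := bound_z (tt01 n) (Dz n) Ff0 (ez n).
set X := fun n => `|u - z n| ^+ 2.
have mz n n' : (n < n')%N -> `|z n' - z n| ^+ 2 <= X n' - X n.
  move=> nn'; have /andP [b0 b1] := @tt01 R n; have /andP [a0 a1] := @tt01 R n'.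
  exact: mono_z a0 (tt_lt nn') b1 (Dz n') (Dz n) (ez n') (ez n).
have Xnd : nondecreasing_seq X.
  move=> n n'; rewrite leq_eqVlt => /orP [/eqP -> //| nn'].
  have := mz _ _ nn'; have := normr_ge0 (z n' - z n); nra.
have Xub : has_ubound (range X).
  exists (C ^+ 2) => _ [n _ <-]; rewrite /X.
  have := bz n; have := normr_ge0 (u - z n); nra.
have cX := nondecreasing_is_cvgn Xnd Xub.
have XL n : X n <= limn X := nondecreasing_cvgn_le Xnd cX n.
have [p hp] : exists p : V, z @ \oo --> p.
  apply: cauchy_to_cvg => e e0.
  have [K hK] := cvg_to_eps cX (mulr_gt0 e0 e0).
  exists K => n Kn; move: Kn; rewrite leq_eqVlt => /orP [/eqP <-|Kn].
    by rewrite subrr normr0 ltW.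
  have h1 := mz _ _ Kn; have h2 := XL n; have h3 := hK K (leqnn K).
  have h4 : `|z K - z n| ^+ 2 <= e * e.
    rewrite distrC; apply: le_trans h1 _.
    rewrite distrC in h3; have := ler_norm (limn X - X K); lra.
  have := normr_ge0 (z K - z n); nra.
have Dp : D p.
  by apply: (closed_cvg D cD _ p hp); apply: nearW.
have res n : `|z n - S (z n)| <= 2 * ttn n * C.
  have /andP [t0 t1] := @tt01 R n.
  have t0' : 0 <= @ttn R n by exact: ltW t0.
  have t1' : 0 <= 1 - @ttn R n by rewrite subr_ge0; exact: ltW t1.
  have := eqz_res (ez n) => /(congr1 (fun v : V => `|v|)) /= h.
  rewrite !normrZ (ger0_norm t0') (ger0_norm t1') in h.
  have := @tt_half R n.
  have := bz n; have := normr_ge0 (z n - S (z n)); nra.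
have Spp : S p = p.
  apply/eqP; rewrite -subr_eq0 -normr_eq0 eq_le normr_ge0 andbT.
  apply: le0_eps => e e0.
  have e30 : 0 < e / 3 by rewrite divr_gt0.
  have [K hK] := cvg_to_eps hp e30.
  have M0 : 0 < 6 * (C + 1) by rewrite mulr_gt0 // ltr_wpDl.
  have [n0 hn0] := tt_small (divr_gt0 e0 M0).
  set n := maxn K n0.
  have h1 := hK n (leq_maxl _ _); have h2 := hn0 n (leq_maxr _ _).
  have h3 := res n.
  have h4 := SNE Dp (Dz n).
  have t1 : ttn n * (6 * (C + 1)) <= e by rewrite -ler_pdivlMr.
  have t0 : 0 <= @ttn R n by have /andP [h _] := @tt01 R n; exact: ltW h.
  have tri := ler_distD (S (z n)) (S p) p.
  have tri2 := ler_distD (z n) (S (z n)) p.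
  rewrite (distrC p (z n)) in h4; rewrite (distrC (z n)) in h3.
  nra.
have Fp : F p by apply: (SST Dp Ff0); rewrite Spp.
exists z, p; do 5 (split => //).
move=> f Ff.
have VIn n : 0 <= ip (u - z n) (z n - f) := VI_z (tt01 n) (Dz n) Ff (ez n).
rewrite -(opprB p f) (ipNr hip) oppr_le0 -oppr_le0.
apply: le0_eps => e e0.
set C' := `|u - f|.
set M := `|u - p| + C + C' + 1.
have M0 : 0 < M by rewrite /M; have := normr_ge0 (u - p); have := normr_ge0 (u - f); rewrite -/C'; lra.
have [K hK] := cvg_to_eps hp (divr_gt0 e0 M0).
have h1 := hK K (leqnn K).
set zK := z K in h1 *.
have dec : ip (u - p) (p - f) = ip (u - p) (p - zK) + ip (u - zK) (zK - f) + ip (zK - p) (zK - f).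
  have -> : p - f = (p - zK) + (zK - f) by rewrite addrA subrK.
  rewrite (ipDr hip) -addrA; congr (_ + _).
  have -> : u - p = (u - zK) + (zK - p) by rewrite addrA subrK.
  by rewrite (ipDl hip).
have c1 := CSabs hip (u - p) (p - zK).
have c2 := CSabs hip (zK - p) (zK - f).
have hzf : `|zK - f| <= C + C'.
  have b := bz K; have t := ler_distD u zK f; rewrite (distrC zK u) in t; rewrite /C'; lra.
have := VIn K; rewrite -/zK => v0.
have l1 := ler_norm (- ip (u - p) (p - zK)); rewrite normrN in l1.
have l2 := ler_norm (- ip (zK - p) (zK - f)); rewrite normrN in l2.
rewrite (distrC p zK) in c1.
have hM : `|zK - p| * M <= e by rewrite -ler_pdivlMr.
have := normr_ge0 (zK - p); have := normr_ge0 (u - p); have := normr_ge0 (zK - f).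
rewrite /M in hM; rewrite dec; nra.
Qed.

End Curve.

Section Ops.
Context {R : realType} {V : normedModType R} (ip : V -> V -> R)
  (hip : is_inner_product ip) (D : set V) (cvD : convex_set_of D)
  (m : nat) (T : 'I_m -> V -> V)
  (hT : forall i, firmly_nonexpansive ip D (T i)).

Definition Fs := \bigcap_(i in [set: 'I_m]) Fix D (T i).

Lemma FsP y : Fs y <-> forall i, D y /\ T i y = y.
Proof. by split => [h i|h i _]; [exact: (h i I)| exact: h]. Qed.

Lemma T_D i y : D y -> D (T i y). Proof. by case: (hT i) => h _; exact: h. Qed.

Lemma T_ne i y y' : D y -> D y' -> `|T i y - T i y'| <= `|y - y'|.
Proof.
move=> Dy Dy'; case: (hT i) => _ /(_ _ _ Dy Dy') h.
have := CS hip (y - y') (T i y - T i y').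
have := normr_ge0 (T i y - T i y'); have := normr_ge0 (y - y').
nra.
Qed.

Lemma T_strict i y f : D y -> Fix D (T i) f ->
  `|T i y - f| <= `|y - f| /\ (`|y - f| <= `|T i y - f| -> T i y = y).
Proof.
move=> Dy [Df Tf]; case: (hT i) => _ /(_ _ _ Dy Df); rewrite Tf => h.
have hcs := CS hip (y - f) (T i y - f).
have := normr_ge0 (T i y - f); have := normr_ge0 (y - f) => h0 h1.
split; first by nra.
move=> hle.
have e : y - T i y = (y - f) - (T i y - f) by rewrite opprB addrA subrK.
have := normB2 hip (y - f) (T i y - f); rewrite -e => h2.
have : `|y - T i y| ^+ 2 <= 0 by nra.
move=> h3; apply/esym/subr0_eq/normr0_eq0.
by apply/eqP; rewrite -sqrf_eq0 eq_le h3 exprn_ge0.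
Qed.

Lemma str_rcons t i y : string_op T (rcons t i) y = T i (string_op T t y).
Proof. by rewrite /string_op foldl_rcons. Qed.

Lemma str_D t y : D y -> D (string_op T t y).
Proof.
elim/last_ind: t => [//|t i IH] Dy; rewrite str_rcons; exact/T_D/IH.
Qed.

Lemma str_ne t y y' : D y -> D y' ->
  `|string_op T t y - string_op T t y'| <= `|y - y'|.
Proof.
elim/last_ind: t => [//|t i IH] Dy Dy'; rewrite !str_rcons.
apply: le_trans (IH Dy Dy'); apply: T_ne; exact: str_D.
Qed.

Lemma str_fix t y : (forall i, i \in t -> T i y = y) -> string_op T t y = y.
Proof.
elim/last_ind: t => [//|t i IH] h; rewrite str_rcons IH.
  by apply: h; rewrite mem_rcons mem_head.
by move=> j jt; apply: h; rewrite mem_rcons in_cons jt orbT.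
Qed.

Lemma str_qn t y f : D y -> Fs f ->
  `|string_op T t y - f| <= `|y - f| /\
  (`|y - f| <= `|string_op T t y - f| -> forall i, i \in t -> T i y = y).
Proof.
move=> Dy /FsP Ff; elim/last_ind: t => [|t i [IH1 IH2]]; first by split.
rewrite str_rcons.
have [h1 h2] := @T_strict i _ _ (str_D t Dy) (Ff i).
split; first exact: le_trans h1 IH1.
move=> hle.
have hz : `|y - f| <= `|string_op T t y - f| by apply: le_trans hle h1.
have fixt := IH2 hz.
have ez : string_op T t y = y by apply: str_fix.
rewrite ez in hle h2.
have hi := h2 hle.
move=> j; rewrite mem_rcons in_cons => /orP [/eqP -> //|]; exact: fixt.
Qed.

Lemma conv_sum (X : eqType) (s : seq X) (wt : X -> R) (P : X -> V) :
  s <> [::] -> (forall t, t \in s -> 0 < wt t) -> (forall t, t \in s -> D (P t)) ->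
  D ((\sum_(t <- s) wt t)^-1 *: \sum_(t <- s) wt t *: P t).
Proof.
elim: s => [//|a s IH] _ hw hP.
rewrite !big_cons.
have wa := hw a (mem_head _ _).
have Pa := hP a (mem_head _ _).
case: s IH hw hP => [|b s] IH hw hP.
  by rewrite !big_nil !addr0 scalerA mulVf ?scale1r ?gt_eqF.
set c' := \sum_(t <- b :: s) wt t; set S' := \sum_(t <- b :: s) wt t *: P t.
have hw' : forall t, t \in b :: s -> 0 < wt t by move=> t ht; apply: hw; rewrite in_cons ht orbT.
have hP' : forall t, t \in b :: s -> D (P t) by move=> t ht; apply: hP; rewrite in_cons ht orbT.
have c0 : 0 < c'.
  rewrite /c' big_cons; apply: ltr_wpDr; last exact: hw' (mem_head _ _).
  by rewrite big_seq; apply: sumr_ge0 => t ts; apply/ltW/hw'; rewrite in_cons ts orbT.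
have DS' := IH (fun H : b :: s = [::] => ltac:(discriminate H)) hw' hP'.
have e : (wt a + c')^-1 *: (wt a *: P a + S') =
    (wt a / (wt a + c')) *: P a + (1 - wt a / (wt a + c')) *: (c'^-1 *: S').
  rewrite scalerDr !scalerA; congr (_ + _); congr (_ *: _); first by rewrite mulrC.
  field; apply/andP; split; rewrite gt_eqF //; exact: ltr_wpDl (ltW wa) c0.
rewrite e; apply: cvD => //.
have s0 : 0 < wt a + c' by exact: ltr_wpDl (ltW wa) c0.
apply/andP; split; first by rewrite divr_ge0 // ltW.
by rewrite ler_pdivrMr // mul1r lerDl ltW.
Qed.

Definition Uc (Om : seq (seq 'I_m)) (wt : seq 'I_m -> R) (y : V) :=
  \sum_(t <- Om) wt t *: string_op T t y.

Section UcS.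
Variables (Om : seq (seq 'I_m)) (wt : seq 'I_m -> R) (hM : in_M Om wt).

Let w01 t : t \in Om -> 0 < wt t <= 1. Proof. by case: hM => _ _ h _; apply: h. Qed.
Let wsum : \sum_(t <- Om) wt t = 1. Proof. by case: hM. Qed.
Let wfit i : exists2 t, t \in Om & i \in t. Proof. by case: hM => _ h _ _; apply: h. Qed.
Let wuniq : uniq Om. Proof. by case: hM. Qed.

Lemma Uc_sub (G : seq 'I_m -> V) v :
  \sum_(t <- Om) wt t *: G t - v = \sum_(t <- Om) wt t *: (G t - v).
Proof.
rewrite -{1}(scale1r v) -wsum scaler_suml -sumrB.
by apply: eq_bigr => t _; rewrite scalerBr.
Qed.

Lemma norm_wsum (G : seq 'I_m -> V) :
  `|\sum_(t <- Om) wt t *: G t| <= \sum_(t <- Om) wt t * `|G t|.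
Proof.
apply: le_trans (ler_norm_sum _ _ _) _.
rewrite big_seq [X in _ <= X]big_seq; apply: ler_sum => t ts.
by rewrite normrZ ger0_norm // ltW //; case/andP: (w01 ts).
Qed.

Lemma wsum_le (a : seq 'I_m -> R) c :
  (forall t, t \in Om -> a t <= c) -> \sum_(t <- Om) wt t * a t <= c.
Proof.
move=> h; rewrite -[X in _ <= X]mul1r -wsum mulr_suml.
rewrite big_seq [X in _ <= X]big_seq; apply: ler_sum => t ts.
by apply: ler_wpM2l; [case/andP: (w01 ts) => /ltW|apply: h].
Qed.

Lemma Uc_D y : D y -> D (Uc Om wt y).
Proof.
move=> Dy.
have Om0 : Om <> [::] by move=> e; move: wsum; rewrite e big_nil => /eqP; rewrite eq_sym oner_eq0.
have := conv_sum Om0 (wt := wt) (P := fun t => string_op T t y).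
rewrite wsum invr1 scale1r; apply.
  by move=> t /w01 /andP[].
by move=> t _; apply: str_D.
Qed.

Lemma Uc_ne y y' : D y -> D y' -> `|Uc Om wt y - Uc Om wt y'| <= `|y - y'|.
Proof.
move=> Dy Dy'; rewrite /Uc -sumrB.
under eq_bigr => t _ do rewrite -scalerBr.
apply: le_trans (norm_wsum _) _; apply: wsum_le => t ts.
exact: str_ne.
Qed.

Lemma Uc_qn y f : D y -> Fs f -> `|Uc Om wt y - f| <= `|y - f|.
Proof.
move=> Dy Ff; rewrite /Uc Uc_sub.
apply: le_trans (norm_wsum _) _; apply: wsum_le => t ts.
by case: (str_qn t Dy Ff).
Qed.

Lemma Uc_st y f : D y -> Fs f -> `|y - f| <= `|Uc Om wt y - f| -> Fs y.
Proof.
move=> Dy Ff hle; apply/FsP => i; split => //.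
have [t0 t0O it0] := wfit i.
have [_ h2] := str_qn t0 Dy Ff; apply: (h2 _ _ it0).
rewrite leNgt; apply/negP => hlt.
have hU : `|Uc Om wt y - f| <= \sum_(t <- Om) wt t * `|string_op T t y - f|.
  by rewrite /Uc Uc_sub; apply: norm_wsum.
have hsum : \sum_(t <- Om) wt t * (`|y - f| - `|string_op T t y - f|) <= 0.
  rewrite (eq_bigr (fun t => wt t * `|y - f| - wt t * `|string_op T t y - f|));
    last by move=> t _; rewrite mulrBr.
  rewrite sumrB -mulr_suml wsum mul1r; lra.
move: hsum; rewrite (bigD1_seq t0) //=.
have : 0 <= \sum_(t <- Om | t != t0) wt t * (`|y - f| - `|string_op T t y - f|).
  rewrite big_seq_cond; apply: sumr_ge0 => t /andP [ts _].
  apply: mulr_ge0; first by case/andP: (w01 ts) => /ltW.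
  by rewrite subr_ge0; case: (str_qn t Dy Ff).
have := w01 t0O => /andP [w0 _].
have : 0 < wt t0 * (`|y - f| - `|string_op T t0 y - f|) by rewrite mulr_gt0 // subr_gt0.
lra.
Qed.

End UcS.
End Ops.

Lemma comb_diff {R : realType} {V : normedModType R} (a b : R) (u B : V) :
  (a *: u + (1 - a) *: B) - (b *: u + (1 - b) *: B) = (a - b) *: (u - B).
Proof.
rewrite opprD addrACA -!scalerBl.
have -> : (1 - a) - (1 - b) = - (a - b) by ring.
by rewrite scaleNr -scalerBr.
Qed.

Lemma comb_same {R : realType} {V : normedModType R} (c : R) (u A B : V) :
  (u + c *: A) - (u + c *: B) = c *: (A - B).
Proof. by rewrite opprD addrACA subrr add0r -scalerBr. Qed.

Lemma comb_norm {R : realType} {V : normedModType R} (a : R) (u B : V) :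
  0 <= a <= 1 -> `|a *: u + (1 - a) *: B| <= a * `|u| + (1 - a) * `|B|.
Proof.
move=> /andP [a0 a1]; apply: le_trans (ler_normD _ _) _.
by rewrite !normrZ !ger0_norm // subr_ge0.
Qed.

Lemma tele_bound {R : realType} (lam : nat -> R) k n :
  `|lam (k + n)%N - lam k| <= \sum_(i < n) `|lam (k + i).+1 - lam (k + i)%N|.
Proof.
elim: n => [|n IH]; first by rewrite addn0 subrr normr0 big_ord0.
rewrite big_ord_recr /= addnS.
have -> : lam (k + n).+1 - lam k = (lam (k + n).+1 - lam (k + n)%N) + (lam (k + n)%N - lam k).
  by rewrite addrA subrK.
apply: le_trans (ler_normD _ _) _; rewrite addrC; exact: lerD.
Qed.

Lemma comb_sub {R : realType} {V : normedModType R} (a : R) (u A : V) :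
  (a *: u + (1 - a) *: A) - A = a *: (u - A).
Proof. by have := comb_diff a 0 u A; rewrite scale0r add0r subr0 scale1r subr0. Qed.

Lemma sum_const_le {R : realType} (n : nat) (G : 'I_n -> R) c :
  (forall i, G i <= c) -> \sum_(i < n) G i <= n%:R * c.
Proof.
move=> h; apply: le_trans (_ : \sum_(i < n) c <= _).
  by apply: ler_sum => i _; apply: h.
by rewrite sumr_const card_ord mulr_natl.
Qed.

Lemma vi_unique {R : realType} {V : normedModType R} (ip : V -> V -> R)
  (hip : is_inner_product ip) (u p q : V) :
  ip (u - p) (q - p) <= 0 -> ip (u - q) (p - q) <= 0 -> p = q.
Proof.
move=> h1 h2.
have e : ip (q - p) (q - p) = ip (u - p) (q - p) + ip (u - q) (p - q).
  have v : (u - p) - (u - q) = q - p by rewrite opprB addrC addrA subrK.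
  by rewrite -(opprB q p) (ipNr hip) -(ipBl hip) v.
have : `|q - p| ^+ 2 <= 0 by rewrite (ipnorm hip) e; lra.
move=> h; apply/esym/subr0_eq/normr0_eq0.
by apply/eqP; rewrite -sqrf_eq0 eq_le h exprn_ge0.
Qed.

Section Main.
Context {R : realType} {V : completeNormedModType R} (ip : V -> V -> R)
  (hip : is_inner_product ip) (D : set V) (cD : closed D) (cvD : convex_set_of D)
  (F : set V) (f0 : V) (Ff0 : F f0) (N : nat) (N0 : (0 < N)%N)
  (U : nat -> V -> V)
  (UD : forall r y, (r < N)%N -> D y -> D (U r y))
  (UNE : forall r y y', (r < N)%N -> D y -> D y' -> `|U r y - U r y'| <= `|y - y'|)
  (UQN : forall r y f, (r < N)%N -> D y -> F f -> `|U r y - f| <= `|y - f|)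
  (UST : forall r y f, (r < N)%N -> D y -> F f -> `|y - f| <= `|U r y - f| -> F y)
  (lam : nat -> R) (l01 : forall k, 0 <= lam k <= 1) (lam0 : lam @ \oo --> 0)
  (ldiv : series lam @ \oo --> +oo)
  (lvar : cvg (series (fun k => `|lam k.+1 - lam k|) @ \oo))
  (u : V) (Du : D u) (x : nat -> V) (Dx0 : D (x 0%N))
  (xrec : forall k, x k.+1 = lam k *: u + (1 - lam k) *: U (k %% N)%N (x k)).

Let Uk k := U (k %% N)%N.
Let ltk k : (k %% N < N)%N. Proof. exact: ltn_pmod. Qed.
Let UkD k y : D y -> D (Uk k y). Proof. exact: UD. Qed.
Let UkNE k y y' : D y -> D y' -> `|Uk k y - Uk k y'| <= `|y - y'|. Proof. exact: UNE. Qed.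
Let UkQN k y f : D y -> F f -> `|Uk k y - f| <= `|y - f|. Proof. exact: UQN. Qed.
Let UkST k y f : D y -> F f -> `|y - f| <= `|Uk k y - f| -> F y. Proof. exact: UST. Qed.

Lemma Dx k : D (x k).
Proof.
elim: k => [//|k IH]; rewrite xrec; apply: cvD => //; first exact: UkD.
Qed.

Let B := `|u - f0| + `|x 0%N - f0|.
Let M := `|u - f0| + B.

Lemma xbound k : `|x k - f0| <= B.
Proof.
elim: k => [|k IH]; first by rewrite /B lerDr.
rewrite xrec -lin_comb; apply: le_trans (comb_norm _ _ (l01 k)) _.
have h1 := UkQN k (Dx k) Ff0.
have := l01 k => /andP [a0 a1].
have : `|u - f0| <= B by rewrite /B lerDl.
have := normr_ge0 (Uk k (x k) - f0). rewrite /Uk in h1 *. nra.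
Qed.

Lemma Ubound k : `|u - Uk k (x k)| <= M.
Proof.
apply: le_trans (ler_distD f0 _ _) _; rewrite /M lerD2l distrC.
exact: le_trans (UkQN k (Dx k) Ff0) (xbound k).
Qed.

Lemma M0 : 0 <= M.
Proof. by rewrite /M /B !addr_ge0. Qed.

Lemma asym e : 0 < e -> exists K, forall k, (K <= k)%N -> `|x (k + N)%N - x k| <= e.
Proof.
move=> e0.
set dl := fun k => `|lam k.+1 - lam k|.
have dl0 k : 0 <= dl k by exact: normr_ge0.
apply: (@xu_lemma R (fun k => `|x (k + N)%N - x k|) (fun k => lam (k + N)%N)
   (fun _ => 0) (fun k => `|lam (k + N)%N - lam k| * M)) => //.
- move=> K M'; have [i hi] := series_div ldiv (K + N)%N M'.
  exists i; move: hi; rewrite big_addn.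
  by have -> : (K + N + i - N = K + i)%N by lia.
- by move=> e' e'0; exists 0%N => k _; apply: ltW.
- by move=> k; apply: mulr_ge0 => //; exact: M0.
- move=> e' e'0.
  have NM0 : 0 < N%:R * M + 1.
    by apply: ltr_wpDl; [apply: mulr_ge0; [exact: ler0n|exact: M0]|exact: ltr01].
  have [K hK] := series_tail dl0 lvar (divr_gt0 e'0 NM0).
  exists K => m n Km.
  apply: le_trans (_ : \sum_(m <= k < n) (\sum_(i < N) dl (k + i)%N) * M <= _).
    apply: ler_sum => k _; apply: ler_wpM2r; first exact: M0.
    exact: tele_bound.
  rewrite -mulr_suml exchange_big /=.
  apply: le_trans (_ : (N%:R * (e' / (N%:R * M + 1))) * M <= _).
    apply: ler_wpM2r; first exact: M0.
    apply: sum_const_le => i.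
    have := hK (m + i)%N (n + i)%N (leq_trans Km (leq_addr _ _)).
    by rewrite big_addn addnK.
  set q := e' / (N%:R * M + 1).
  have hq : q * (N%:R * M + 1) = e' by rewrite /q divfK // gt_eqF.
  have q0 : 0 <= q by rewrite /q divr_ge0 // ltW.
  have := M0; have : 0 <= N%:R :> R by exact: ler0n.
  move=> h1 h2; rewrite -[X in _ <= X]hq; nra.
- move=> k; rewrite mulr0 addr0 addSn !xrec.
  have em : ((k + N) %% N = k %% N)%N by rewrite modnDr.
  rewrite em.
  set A := U (k %% N)%N (x (k + N)%N); set Bk := U (k %% N)%N (x k).
  set l' := lam (k + N)%N; set l := lam k.
  have -> : l' *: u + (1 - l') *: A - (l *: u + (1 - l) *: Bk) =
     ((l' *: u + (1 - l') *: A) - (l' *: u + (1 - l') *: Bk)) +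
     ((l' *: u + (1 - l') *: Bk) - (l *: u + (1 - l) *: Bk)) by rewrite addrA subrK.
  rewrite comb_same comb_diff.
  apply: le_trans (ler_normD _ _) _.
  rewrite !normrZ.
  have /andP [a0 a1] := l01 (k + N)%N.
  rewrite (ger0_norm (x := 1 - l')); last by rewrite subr_ge0.
  have h1 : `|A - Bk| <= `|x (k + N)%N - x k| by apply: UNE => //; apply: Dx.
  have h2 : `|u - Bk| <= M by have := Ubound k.
  apply: lerD; first by apply: ler_wpM2l => //; rewrite subr_ge0.
  by apply: ler_wpM2l.
Qed.

Fixpoint compU (r n : nat) (y : V) : V :=
  if n is n'.+1 then Uk (r + n')%N (compU r n' y) else y.

Lemma compD r n y : D y -> D (compU r n y).
Proof. by elim: n => [//|n IH] Dy /=; apply: UkD; apply: IH. Qed.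

Lemma compNE r n y y' : D y -> D y' -> `|compU r n y - compU r n y'| <= `|y - y'|.
Proof.
elim: n => [//|n IH] Dy Dy' /=.
apply: le_trans (IH Dy Dy'); apply: UkNE; exact: compD.
Qed.

Lemma compQN r n y f : D y -> F f -> `|compU r n y - f| <= `|y - f|.
Proof.
elim: n => [//|n IH] Dy Ff /=.
apply: le_trans (IH Dy Ff); apply: UkQN => //; exact: compD.
Qed.

Lemma compST r n y f : D y -> F f -> `|y - f| <= `|compU r n.+1 y - f| -> F y.
Proof.
elim: n => [|n IH] Dy Ff /=; first by rewrite addn0; exact: UkST.
move=> h; apply: IH => //=.
apply: le_trans h _; apply: UkQN => //; exact: (compD r n.+1 Dy).
Qed.

Lemma comp_mod r n y : compU (r %% N)%N n y = compU r n y.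
Proof.
elim: n => [//|n IH] /=; rewrite IH /Uk.
by rewrite modnDml.
Qed.

Lemma xcomp k n : `|x (k + n)%N - compU k n (x k)| <= M * \sum_(i < n) lam (k + i)%N.
Proof.
elim: n => [|n IH]; first by rewrite addn0 subrr normr0 big_ord0 mulr0.
rewrite big_ord_recr /= addnS xrec.
set A := U ((k + n) %% N)%N (x (k + n)%N).
have -> : lam (k + n)%N *: u + (1 - lam (k + n)%N) *: A - Uk (k + n)%N (compU k n (x k)) =
   (lam (k + n)%N *: u + (1 - lam (k + n)%N) *: A - A) + (A - Uk (k + n)%N (compU k n (x k))).
  by rewrite addrA subrK.
rewrite comb_sub; apply: le_trans (ler_normD _ _) _.
rewrite normrZ mulrDr.
have /andP [l0 _] := l01 (k + n)%N.
rewrite ger0_norm // addrC; apply: lerD.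
  apply: le_trans IH; apply: UkNE; [exact: Dx|apply: compD; exact: Dx].
by rewrite mulrC; apply: ler_wpM2r => //; exact: Ubound.
Qed.

Lemma residual e : 0 < e -> exists K, forall k, (K <= k)%N ->
  `|x k - compU (k %% N)%N N (x k)| <= e.
Proof.
move=> e0.
have e20 : 0 < e / 2 by rewrite divr_gt0.
have [K1 hK1] := asym e20.
have NM0 : 0 < N%:R * M + 1.
  by apply: ltr_wpDl; [apply: mulr_ge0; [exact: ler0n|exact: M0]|exact: ltr01].
have [K2 hK2] := seq0_eps lam0 (divr_gt0 e20 NM0).
exists (maxn K1 K2) => k hk.
rewrite comp_mod.
have h1 := hK1 k (leq_trans (leq_maxl _ _) hk).
have h2 := xcomp k N.
set q := e / 2 / (N%:R * M + 1).
have hs : \sum_(i < N) lam (k + i)%N <= N%:R * q.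
  apply: sum_const_le => i.
  have := hK2 (k + i)%N (leq_trans (leq_maxr _ _) (leq_trans hk (leq_addr _ _))).
  by apply: le_trans; apply: ler_norm.
have hq : q * (N%:R * M + 1) = e / 2 by rewrite /q divfK // gt_eqF.
have q0 : 0 <= q by rewrite /q divr_ge0 // ltW.
have tri := ler_distD (x (k + N)%N) (x k) (compU k N (x k)).
rewrite distrC in h1.
have := M0; have : 0 <= N%:R :> R by exact: ler0n.
move=> a b.
have : M * \sum_(i < N) lam (k + i)%N <= M * (N%:R * q) by apply: ler_wpM2l.
nra.
Qed.

Lemma compST' r y f : D y -> F f -> `|y - f| <= `|compU r N y - f| -> F y.
Proof. by rewrite -(prednK N0); apply: compST. Qed.

Lemma limsup : exists p, F p /\ (forall f, F f -> ip (u - p) (f - p) <= 0) /\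
  forall e, 0 < e -> exists K, forall k, (K <= k)%N -> ip (u - p) (x k - p) <= e.
Proof.
have hc r : exists (z : nat -> V) (p : V), (forall n, D (z n)) /\
  (forall n, z n = ttn n *: u + (1 - ttn n) *: compU r N (z n)) /\
  (forall n, `|u - z n| <= `|u - f0|) /\ z @ \oo --> p /\
  F p /\ (forall f, F f -> ip (u - p) (f - p) <= 0).
  apply: (curve_lim hip cD cvD Ff0 Du).
  - exact: compD.
  - exact: compNE.
  - exact: compQN.
  - exact: compST'.
have [Z hZ] := choice hc.
have [P hP] := choice hZ.
set p := P 0%N.
have Pp r : P r = p.
  have [_ [_ [_ [_ [Fr VIr]]]]] := hP r.
  have [_ [_ [_ [_ [F0 VI0]]]]] := hP 0%N.
  by apply: (vi_unique hip); [apply: VIr | apply: VI0].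
have [_ [_ [_ [_ [Fp VIp]]]]] := hP 0%N.
exists p; split => //; split => //.
move=> e e0.
set C1 := `|u - f0|.
set C3 := B + `|f0 - p|.
set L := C3 + C1 + 1.
have C10 : 0 <= C1 by exact: normr_ge0.
have C30 : 0 <= C3 by rewrite /C3 /B !addr_ge0.
have L0 : 0 < L by rewrite /L ltr_wpDl // addr_ge0.
have eL : 0 < e / (2 * L) by rewrite divr_gt0 // mulr_gt0.
have [n0 hn0] := @unif_K N (fun r n0 => forall n, (n0 <= n)%N -> `|Z r n - p| <= e / (2 * L))
  (fun r K K' KK' h n Kn => h n (leq_trans KK' Kn))
  (fun r _ => let: conj _ (conj _ (conj _ (conj hcv _))) := hP r in
     cvg_to_eps (eq_ind _ (fun q => Z r @ \oo --> q) hcv _ (Pp r)) eL).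
have /andP [t0 t1] := @tt01 R n0.
set t := @ttn R n0.
set C2 := C1 + C1 + B + 1.
have C20 : 0 < C2 by rewrite /C2 ltr_wpDl // !addr_ge0 // /B addr_ge0.
have e' : 0 < e * t / (2 * C2) by rewrite divr_gt0 // ?mulr_gt0.
have [K hK] := residual e'.
exists K => k Kk.
set r := (k %% N)%N.
have rN : (r < N)%N by exact: ltn_pmod.
have [Dz [ez [bz _]]] := hP r.
set z := Z r n0.
have hzp := hn0 r rN n0 (leqnn _).
have hres := hK k Kk; rewrite -/r in hres.
have ki := key_ineq hip (@compNE r N) (tt01 n0) (Dz n0) (Dx k) (ez n0).
rewrite -/z -/t in ki.
have hzx : `|z - x k| <= C2.
  have a1 := ler_distD u z (x k); have a2 := ler_distD f0 u (x k).
  have b1 := bz n0; rewrite -/z in b1; have b2 := xbound k.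
  rewrite (distrC z u) in a1; rewrite (distrC f0 (x k)) -/C1 in a2; rewrite -/C1 in b1; rewrite /C2; lra.
have h1 : ip (u - z) (x k - z) <= e / 2.
  have hr : `|compU r N (x k) - x k| <= e * t / (2 * C2) by rewrite distrC.
  have : `|compU r N (x k) - x k| * `|z - x k| <= e * t / (2 * C2) * C2.
    by apply: ler_pM => //; exact: normr_ge0.
  have -> : e * t / (2 * C2) * C2 = t * (e / 2) by field; rewrite gt_eqF.
  move=> h; have : t * ip (u - z) (x k - z) <= t * (e / 2) by lra.
  by rewrite ler_pM2l.
have dec : ip (u - p) (x k - p) = ip (u - z) (x k - z) + ip (u - z) (z - p) + ip (z - p) (x k - p).
  have ex : x k - p = (x k - z) + (z - p) by rewrite addrA subrK.
  have eu : u - p = (u - z) + (z - p) by rewrite addrA subrK.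
  by rewrite {1}eu (ipDl hip) {1}ex (ipDr hip).
have c1 := CSabs hip (u - z) (z - p).
have c2 := CSabs hip (z - p) (x k - p).
have l1 := ler_norm (ip (u - z) (z - p)).
have l2 := ler_norm (ip (z - p) (x k - p)).
have hxp : `|x k - p| <= C3.
  have := ler_distD f0 (x k) p; have := xbound k; rewrite /C3; lra.
have b1 := bz n0; rewrite -/z -/C1 in b1.
have n1 := normr_ge0 (z - p); have n2 := normr_ge0 (u - z); have n3 := normr_ge0 (x k - p).
have hL : `|z - p| * (2 * L) <= e by rewrite -ler_pdivlMr // mulr_gt0.
rewrite dec /L in hL *. nra.
Qed.

Lemma main_thm : exists p, F p /\ (forall f, F f -> ip (u - p) (f - p) <= 0) /\
  x @ \oo --> p.
Proof.
have [p [Fp [VIp hls]]] := limsup.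
exists p; split => //; split => //.
have hx : forall e, 0 < e -> exists K, forall n, (K <= n)%N -> `|x n - p| ^+ 2 <= e.
  apply: (@xu_lemma R (fun k => `|x k - p| ^+ 2) lam
    (fun k => 2 * ip (u - p) (x k.+1 - p)) (fun _ => 0)).
  - by move=> k; exact: sqr_ge0.
  - exact: l01.
  - exact: series_div ldiv.
  - move=> e e0; have [K hK] := hls (e / 2) (divr_gt0 e0 (ltr0Sn _ 1)).
    exists K => k Kk; have := hK k.+1 (leq_trans Kk (leqnSn _)); lra.
  - by [].
  - by move=> e e0; exists 0%N => m n _; rewrite big1 // ltW.
  - move=> k; rewrite addr0.
    set A := U (k %% N)%N (x k).
    have ev : x k.+1 - p = lam k *: (u - p) + (1 - lam k) *: (A - p).
      by rewrite lin_comb xrec.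
    set v := x k.+1 - p in ev *.
    have e1 : `|v| ^+ 2 = lam k * ip (u - p) v + (1 - lam k) * ip (A - p) v.
      by rewrite (ipnorm hip) {1}ev (ipL hip) (ipZl hip).
    have c := CS hip (A - p) v.
    have q := UkQN k (Dx k) Fp; rewrite /Uk -/A in q.
    have /andP [l0 l1] := l01 k.
    have n1 := normr_ge0 v; have n2 := normr_ge0 (A - p); have n3 := normr_ge0 (x k - p).
    have h2 : (1 - lam k) * ip (A - p) v <= (1 - lam k) * (`|x k - p| * `|v|).
      apply: ler_wpM2l; first by rewrite subr_ge0.
      apply: le_trans c _; apply: ler_wpM2r => //.
    have h3 : 0 <= (1 - lam k) * (`|x k - p| - `|v|) ^+ 2.
      by apply: mulr_ge0; [rewrite subr_ge0|exact: sqr_ge0].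
    have h4 : 0 <= lam k * `|v| ^+ 2 by apply: mulr_ge0 => //; exact: sqr_ge0.
    nra.
apply: eps_to_cvg => e e0.
have [K hK] := hx (e * e) (mulr_gt0 e0 e0).
exists K => n Kn; have := hK n Kn; have := normr_ge0 (x n - p); nra.
Qed.

End Main.

Theorem theorem4 (R : realType) (V : completeNormedModType R)
  (ip : V -> V -> R) (D : set V) (m : nat) (T : 'I_m -> V -> V)
  (N : nat) (Omega : nat -> seq (seq 'I_m)) (w : nat -> seq 'I_m -> R)
  (lam : nat -> R) (u x0 : V) (x : nat -> V) :
  is_inner_product ip ->
  D !=set0 -> closed D -> convex_set_of D ->
  (forall i, firmly_nonexpansive ip D (T i)) ->
  (\bigcap_(i in [set: 'I_m]) Fix D (T i)) !=set0 ->
  (0 < N)%N ->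
  (forall r, (r < N)%N -> in_M (Omega r) (w r)) ->
  steering lam ->
  D u -> D x0 ->
  x 0%N = x0 ->
  (forall k : nat, x k.+1 =
     lam k *: u + (1 - lam k) *:
       \sum_(t <- Omega (k %% N)%N) w (k %% N)%N t *: string_op T t (x k)) ->
  exists p, is_metric_proj (\bigcap_(i in [set: 'I_m]) Fix D (T i)) u p
            /\ x @ \oo --> p.
Proof.
move=> hip D0 cD cvD hT [f0 Ff0] N0 hM [l01 lam0 ldiv lvar] Du Dx0 hx0 hrec.
have Dx0' : D (x 0%N) by rewrite hx0.
have [p [Fp [VIp hp]]] := @main_thm R V ip hip D cD cvD (Fs D T) f0 Ff0 N N0
  (fun r => Uc T (Omega r) (w r))
  (fun r y rN Dy => Uc_D cvD hT (hM r rN) Dy)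
  (fun r y y' rN Dy Dy' => Uc_ne hip hT (hM r rN) Dy Dy')
  (fun r y f rN Dy Ff => Uc_qn hip hT (hM r rN) Dy Ff)
  (fun r y f rN Dy Ff h => Uc_st hip hT (hM r rN) Dy Ff h)
  lam l01 lam0 ldiv lvar u Du x Dx0' hrec.
exists p; split => //; split => // y Fy.
have v := VIp y Fy.
have e : u - y = (u - p) - (y - p) by rewrite opprB addrA subrK.
have h : `|u - p| ^+ 2 <= `|u - y| ^+ 2.
  rewrite e [X in _ <= X](normB2 hip); have := sqr_ge0 `|y - p|; lra.
by move: h; rewrite ler_pXn2r // nnegrE.
Qed.
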